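(* Let $R_n(x)=\sum_{k=0}^nR_{n,k}x^k$ for $n\ge1$. For integers $n\ge k\ge 0$ let $B_{n,k}=B_{n,k}(x_1,x_2,\dots,x_{n-k+1})$ be the partial Bell polynomials, defined by $\sum_{n\ge k}B_{n,k}\frac{t^n}{n!}=\frac1{k!}\big(\sum_{i\ge1}x_i\frac{t^i}{i!}\big)^k$. When $x_i=(1-x^2)^{\lfloor (i-1)/2\rfloor}$ for each $i\ge1$, we have, for $n\ge 1$, $$R_{n+1}(x)=\sum_{k=1}^{n}(-1)^{n-k}k!\,(1+x)^{k+1}B_{n,k}.$$
   Context: Let $D$ be the derivation of $\mathbb{Q}[y,z]$ with $D(y)=z^2$, $D(z)=yz$ (corresponding to $d/dx$ with $y=\tan x$, $z=\sec x$). The integers $R_{n,k}$ are defined for $n\ge1$ by $D^n(y+z)=\sum_{k=0}^nR_{n,k}y^{n-k}z^{k+1}$ in $\mathbb{Q}[y,z]$. Equivalently, $R_1(x)=1+x$ and $R_{n+1}(x)=(1+nx^2)R_n(x)+x(1-x^2)R_n'(x)$ for $n\ge1$. *)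

(* Defs.v *)
From HB Require Import structures.
From mathcomp Require Import all_boot all_order all_algebra.
Set Implicit Arguments. Unset Strict Implicit. Unset Printing Implicit Defensive.
Import Order.TTheory GRing.Theory Num.Theory.
Local Open Scope ring_scope.

(* Q[y,z] is represented as {poly {poly rat}}: the outer variable is z,
   the inner variable (coefficients) is y.  The monomial y^a z^b of p has
   coefficient (p`_b)`_a. *)
Definition QYZ := {poly {poly rat}}.
Definition yv : QYZ := ('X : {poly rat})%:P.
Definition zv : QYZ := 'X.

(* The derivation D of Q[y,z] with D y = z^2, D z = y z :
   D p = (dp/dy) * D y + (dp/dz) * D z. *)
Definition Dder (p : QYZ) : QYZ :=
  map_poly (@deriv rat) p * zv ^+ 2 + p^`() * (yv * zv).

Definition Rcoef (n k : nat) : rat :=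
  ((iter n Dder (yv + zv))`_(k.+1))`_(n - k).

Definition Rpoly (n : nat) : {poly rat} := \poly_(k < n.+1) Rcoef n k.

(* Only the terms i <= n can contribute to [t^n]. *)
Definition bellB (n k : nat) (xs : nat -> {poly rat}) : {poly rat} :=
  let S : {poly {poly rat}} :=
    \sum_(1 <= i < n.+1) (((i`!)%:R^-1 : rat) *: xs i) *: 'X^i in
  ((n`!)%:R / (k`!)%:R : rat) *: (S ^+ k)`_n.

Definition xsR (i : nat) : {poly rat} := (1 - 'X^2) ^+ ((i.-1)./2).

(* Main.v *)
Require Import Defs.
From HB Require Import structures.
From mathcomp Require Import all_boot all_order all_algebra.
From mathcomp Require Import ring zify.
Import Order.TTheory GRing.Theory Num.Theory.
Local Open Scope ring_scope.

Lemma mapdM (p q : QYZ) : map_poly (@deriv rat) (p * q) =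
  map_poly (@deriv rat) p * q + p * map_poly (@deriv rat) q.
Proof.
apply/polyP => i; rewrite coefD coef_map /= !coefM (raddf_sum (@deriv rat)) -big_split /=.
by apply: eq_bigr => j _; rewrite derivM !coef_map.
Qed.

Lemma DderM (p q : QYZ) : Dder (p * q) = Dder p * q + p * Dder q.
Proof. rewrite /Dder mapdM derivM; ring. Qed.

Lemma DderD (p q : QYZ) : Dder (p + q) = Dder p + Dder q.
Proof. rewrite /Dder raddfD derivD; ring. Qed.

Lemma DderN (p : QYZ) : Dder (- p) = - Dder p.
Proof. rewrite /Dder raddfN derivN; ring. Qed.

Lemma Dder0 : Dder 0 = 0.
Proof. by rewrite /Dder raddf0 deriv0 !mul0r addr0. Qed.

Lemma DderB (p q : QYZ) : Dder (p - q) = Dder p - Dder q.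
Proof. by rewrite DderD DderN. Qed.

Lemma Dder_sum (I : Type) (r : seq I) (P : pred I) (f : I -> QYZ) :
  Dder (\sum_(i <- r | P i) f i) = \sum_(i <- r | P i) Dder (f i).
Proof.
elim/big_rec2: _ => [|i x y _ IH]; first exact: Dder0.
by rewrite DderD IH.
Qed.

Lemma Dder_natmul (p : QYZ) k : Dder (k%:R * p) = k%:R * Dder p.
Proof.
rewrite !mulr_natl; elim: k => [|k IH]; first by rewrite !mulr0n Dder0.
by rewrite !mulrS DderD IH.
Qed.

Lemma Dy : Dder yv = zv ^+ 2.
Proof.
rewrite /Dder /yv map_polyC /= derivC derivX mul0r addr0 mul1r //.
Qed.

Lemma Dz : Dder zv = yv * zv.
Proof.
rewrite /Dder /zv derivX mul1r.
have -> : map_poly (@deriv rat) 'X = 0.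
  apply/polyP => i; rewrite coef_map coefX coef0.
  by case: (i == 1)%N => /=; rewrite ?deriv0 // -polyC1 derivC.
by rewrite mul0r add0r.
Qed.

Definition cc : QYZ := zv ^+ 2 - yv ^+ 2.

Lemma Dc : Dder cc = 0.
Proof. rewrite /cc DderB !expr2 !DderM Dy Dz; ring. Qed.

Lemma Dcpow j : Dder ((- cc) ^+ j) = 0.
Proof.
elim: j => [|j IH].
  rewrite expr0 /Dder -polyC1 map_polyC /= !derivC. have -> : (0 : {poly rat})%:P = 0 :> QYZ by rewrite polyC0. by rewrite !mul0r addr0.
by rewrite exprS DderM IH DderN Dc; ring.
Qed.

Definition FF (m : nat) : QYZ := iter m Dder (yv + zv).

Arguments FF : simpl never.
Lemma FFS m : FF m.+1 = Dder (FF m).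
Proof. by rewrite /FF iterS. Qed.

Definition kk (i : nat) : QYZ :=
  if i == 0%N then zv - yv
  else if odd i then - ((- cc) ^+ i./2 * cc) else - ((- cc) ^+ i./2 * yv).

Lemma Dkk i : Dder (kk i) = yv * kk i + kk i.+1.
Proof.
rewrite /kk /=; case: i => [|i] /=.
  by rewrite DderB Dy Dz /cc; ring.
case: (boolP (odd i)) => Hi /=.
  rewrite DderN DderM Dcpow Dy uphalfE /=.
  have -> : (uphalf i) = (i./2).+1 by rewrite uphalf_half Hi.
  rewrite exprS /cc; ring.
rewrite DderN DderM Dcpow Dc.
have -> : (uphalf i) = i./2 by rewrite uphalf_half (negbTE Hi).

rewrite exprS; ring.
Qed.

Definition EE (n : nat) : QYZ :=
  \sum_(i < n.+1) ('C(n, i))%:R * (FF (n - i).+1 * kk i).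

Lemma DEE n : Dder (EE n) = yv * EE n + EE n.+1.
Proof.
have H1 : EE n.+1 = FF n.+2 * kk 0 +
   \sum_(i < n.+1) 'C(n, i.+1)%:R * (FF (n - i).+1 * kk i.+1) +
   \sum_(i < n.+1) 'C(n, i)%:R * (FF (n - i).+1 * kk i.+1).
  rewrite /EE big_ord_recl /= bin0 mul1r -addrA; congr (_ + _).
  rewrite -big_split /=; apply: eq_bigr => i _.
  by rewrite /bump /= subSS binS natrD mulrDl.
have H2 : \sum_(i < n.+1) 'C(n, i)%:R * (FF (n - i).+2 * kk i) =
   FF n.+2 * kk 0 +
   \sum_(i < n.+1) 'C(n, i.+1)%:R * (FF (n - i).+1 * kk i.+1).
  rewrite big_ord_recl /= bin0 subn0 mul1r; congr (_ + _).
  rewrite [RHS]big_ord_recr /= bin_small // mul0r addr0.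
  apply: eq_bigr => i _; rewrite /bump /=.
  have -> : (n - i = (n - i.+1).+1)%N by have := ltn_ord i; lia.
  by [].
rewrite H1 /EE Dder_sum.
under eq_bigr => i _ do rewrite Dder_natmul DderM -FFS Dkk mulrDr mulrDr mulrDr.
rewrite !big_split /= H2 mulr_sumr.
have -> : \sum_(i < n.+1) yv * ('C(n, i)%:R * (FF (n - i).+1 * kk i)) =
  \sum_(i < n.+1) 'C(n, i)%:R * (FF (n - i).+1 * (yv * kk i)).
  by apply: eq_bigr => i _; rewrite mulrCA; congr (_ * _); rewrite mulrCA.
ring.
Qed.

Lemma FF1 : FF 1 = zv ^+ 2 + yv * zv.
Proof. by rewrite FFS /FF /= DderD Dy Dz. Qed.

Lemma EE0 : EE 0 = zv * cc.
Proof.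
rewrite /EE big_ord1 bin0 mul1r subn0 FF1 /kk /= /cc; ring.
Qed.

Lemma EE_eq0 n : (1 <= n)%N -> EE n = 0.
Proof.
elim: n => [//|n IH] _.
have := DEE n.
case: n IH => [_|n IH].
  rewrite EE0 DderM Dz Dc => H.
  have -> : EE 1 = yv * zv * cc + zv * 0 - yv * (zv * cc) by rewrite H; ring.
  ring.
rewrite IH // Dder0 mulr0 add0r => H; by rewrite -H.
Qed.

Lemma coefDder (p : QYZ) b a : ((Dder p)`_b)`_a =
  (if (b < 2)%N then 0 else (p`_(b-2))`_a.+1 *+ a.+1) +
  (if b == 0%N then 0 else if a == 0%N then 0 else (p`_b)`_a.-1 *+ b).
Proof.
rewrite /Dder /zv /yv coefD coefD coefMXn mulrA coefMX.
congr (_ + _).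
  by case: (b < 2)%N; rewrite ?coef0 // coef_map /= coef_deriv.
case: b => [|b] /=; first by rewrite coef0.
rewrite coefMC coef_deriv coefMX.
by case: (a == 0%N); rewrite ?coef0 // coefMn.
Qed.

Definition homog m (p : QYZ) :=
  forall b a, ~~ ((0 < b)%N && (a + b == m.+1)%N) -> (p`_b)`_a = 0.

Lemma homogD m p : homog m p -> homog m.+1 (Dder p).
Proof.
move=> H b a Hba; rewrite coefDder.
rewrite (_ : (if (b < 2)%N then 0 else (p`_(b-2))`_a.+1 *+ a.+1) = 0); last first.
  case: ltnP => Hb //; rewrite H ?mul0rn //.
  apply: contra Hba => /andP[H1 /eqP H2]; apply/andP; split; apply/eqP; lia.
case: (b =P 0%N) => [_|/eqP Hb]; first by rewrite addr0.
case: (a =P 0%N) => [_|/eqP Ha]; first by rewrite addr0.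
rewrite H ?mul0rn ?addr0 //.
apply: contra Hba => /andP[H1 /eqP H2]; apply/andP; split; apply/eqP; lia.
Qed.

Lemma homog1 : homog 1 (FF 1).
Proof.
rewrite FF1 /zv /yv => b a Hba.
rewrite coefD coefXn mulrC coefXM coefC.
case: b Hba => [|[|[|b]]] /= Hba; rewrite ?coef0 ?add0r ?addr0 //;
  case: a Hba => [|[|a]] //= Hba; rewrite ?coefX ?coef1 ?coefC ?coef0 //.
Qed.

Lemma homogFF m : (1 <= m)%N -> homog m (FF m).
Proof.
elim: m => [//|m IH] _; case: m IH => [_|m IH]; first exact: homog1.
by rewrite FFS; apply: homogD; apply: IH.
Qed.

Definition ev (p : QYZ) : {poly rat} := map_poly (horner_eval 1) p.

Lemma ev_homog m p : homog m p ->
  ev p = 'X * \poly_(k < m.+1) (p`_k.+1)`_(m - k).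
Proof.
move=> H; apply/polyP => b.
rewrite /ev coef_map /= horner_evalE coefXM.
case: b => [|b] /=.
  suff -> : p`_0 = 0 by rewrite horner0.
  by apply/polyP => a; rewrite coef0 H.
rewrite coef_poly.
case: ltnP => Hb.
  have E : p`_b.+1 = ((p`_b.+1)`_(m - b)) *: 'X^(m - b).
    apply/polyP => a; rewrite coefZ coefXn.
    case: eqP => [->|/eqP Ha]; first by rewrite mulr1.
    rewrite mulr0 H //; apply/negP => /andP[_ /eqP Hab]; move/eqP: Ha; lia.
  by rewrite [in LHS]E hornerZ hornerXn expr1n mulr1.
suff -> : p`_b.+1 = 0 by rewrite hornerE.
apply/polyP => a; rewrite coef0 H //; apply/negP => /andP[_ /eqP Hab]; lia.
Qed.

Lemma evFF m : (1 <= m)%N -> ev (FF m) = 'X * Rpoly m.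
Proof. by move=> Hm; rewrite (@ev_homog m _ (homogFF m Hm)). Qed.

Lemma evM p q : ev (p * q) = ev p * ev q. Proof. by rewrite /ev rmorphM. Qed.
Lemma evD p q : ev (p + q) = ev p + ev q. Proof. by rewrite /ev rmorphD. Qed.
Lemma evN p : ev (- p) = - ev p. Proof. by rewrite /ev rmorphN. Qed.
Lemma evB p q : ev (p - q) = ev p - ev q. Proof. by rewrite /ev rmorphB. Qed.
Lemma evX p k : ev (p ^+ k) = ev p ^+ k. Proof. by rewrite /ev rmorphXn. Qed.
Lemma ev_nat k : ev k%:R = k%:R. Proof. by rewrite /ev rmorph_nat. Qed.
Lemma ev_sum (I : Type) (r : seq I) (P : pred I) (f : I -> QYZ) :
  ev (\sum_(i <- r | P i) f i) = \sum_(i <- r | P i) ev (f i).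
Proof. by rewrite /ev rmorph_sum. Qed.
Lemma evy : ev yv = 1.
Proof. by rewrite /ev /yv map_polyC /= horner_evalE hornerX. Qed.
Lemma evz : ev zv = 'X.
Proof. by rewrite /ev /zv map_polyX. Qed.
Lemma evc : ev (- cc) = 1 - 'X ^+ 2.
Proof. by rewrite /cc evN evB !evX evy evz expr1n opprB. Qed.

Definition aa (i : nat) : {poly rat} :=
  if i == 0%N then 1 else (-1) ^+ i * (1 + 'X) * xsR i.

Lemma ev_kk i : ev (kk i) = ('X - 1) * aa i.
Proof.
rewrite /kk /aa; case: i => [|i] /=.
  by rewrite evB evy evz mulr1.
rewrite /xsR /= exprS -signr_odd.
case: (boolP (odd i)) => Hi /=.
  have -> : (uphalf i) = (i./2).+1 by rewrite uphalf_half Hi.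
  rewrite evN evM evX evc evy exprS; ring.
have -> : (uphalf i) = i./2 by rewrite uphalf_half (negbTE Hi).
rewrite evN evM evX evc -[cc]opprK evN evc; ring.
Qed.

Lemma X_neq0 : ('X : {poly rat}) != 0.
Proof. by rewrite -size_poly_eq0 size_polyX. Qed.

Lemma Xm1_neq0 : ('X - 1 : {poly rat}) != 0.
Proof. by rewrite -size_poly_eq0 -polyC1 size_XsubC. Qed.

Lemma Rpoly1 : Rpoly 1 = 1 + 'X.
Proof.
apply: (mulfI X_neq0); rewrite -evFF // FF1 evD evM !evX evy evz; ring.
Qed.

Lemma Rrec m : \sum_(i < m.+1) 'C(m, i)%:R * (aa i * Rpoly (m - i)%N.+1) =
  if m == 0%N then 1 + 'X else 0.
Proof.
case: m => [|m] /=.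
  by rewrite big_ord1 bin0 mul1r /aa /= mul1r Rpoly1.
apply: (mulfI (mulf_neq0 X_neq0 Xm1_neq0)); rewrite mulr0.
have H : ev (EE m.+1) = 0 by rewrite EE_eq0 // /ev rmorph0.
rewrite -[in RHS]H /EE ev_sum mulr_sumr; apply: eq_bigr => i _.
rewrite evM ev_nat evM evFF // ev_kk; ring.
Qed.

Lemma uniq_rec n (x y : nat -> {poly rat}) :
  (forall m, (m <= n)%N ->
     \sum_(i < m.+1) 'C(m, i)%:R * (aa i * x (m - i)%N) =
     \sum_(i < m.+1) 'C(m, i)%:R * (aa i * y (m - i)%N)) ->
  forall m, (m <= n)%N -> x m = y m.
Proof.
move=> H; elim/ltn_ind => m IH Hm.
have := H m Hm; rewrite !big_ord_recl /= bin0 subn0 /aa /= !mul1r.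
have -> : \sum_(i < m) 'C(m, bump 0 i)%:R * (aa (bump 0 i) * x (m - bump 0 i)%N) =
          \sum_(i < m) 'C(m, bump 0 i)%:R * (aa (bump 0 i) * y (m - bump 0 i)%N).
  apply: eq_bigr => i _; rewrite IH //; have := ltn_ord i; rewrite /bump /=; lia.
by move/addIr.
Qed.

Definition SS n : {poly {poly rat}} :=
  \sum_(1 <= i < n.+1) (((i`!)%:R^-1 : rat) *: xsR i) *: 'X^i.
Definition VV n := (- (1 + 'X))%:P * SS n.
Definition QQ n := \sum_(k < n.+1) VV n ^+ k.
Definition hh n m : {poly rat} :=
  ((-1) ^+ m * (m`!)%:R) * ((1 + 'X) * (QQ n)`_m).

Lemma SS_coef n i : (SS n)`_i =
  if (1 <= i <= n)%N then ((i`!)%:R^-1 : rat) *: xsR i else 0.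
Proof.
rewrite /SS coef_sum.
under eq_bigr => j _ do rewrite coefZ coefXn.
case: ifP => Hi.
  rewrite (bigD1_seq i) /= ?mem_index_iota ?iota_uniq //.
  rewrite eqxx mulr1 big1 ?addr0 // => j Hj.
  by rewrite eq_sym (negbTE Hj) mulr0.
rewrite big_nat_cond big1 // => j /andP[Hj _].
case: eqP => [E|_]; last by rewrite mulr0.
by subst; rewrite Hj in Hi.
Qed.

Lemma pow_coef_low (p : {poly {poly rat}}) k i :
  p`_0 = 0 -> (i < k)%N -> (p ^+ k)`_i = 0.
Proof.
move=> Hp; elim: k i => [//|k IH] i Hi.
rewrite exprS coefM big1 // => [[[|j] Hj]] _ /=; first by rewrite Hp mul0r.
by rewrite IH ?mulr0 //; lia.
Qed.

Lemma VV0 n : (VV n)`_0 = 0.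
Proof. by rewrite /VV coefCM SS_coef /= mulr0. Qed.

Lemma tele (p : {poly {poly rat}}) N :
  (1 - p) * \sum_(k < N) p ^+ k = 1 - p ^+ N.
Proof.
elim: N => [|N IH]; first by rewrite big_ord0 mulr0 expr0 subrr.
by rewrite big_ord_recr /= mulrDr IH exprS; ring.
Qed.

Lemma Qrec n m : (m <= n)%N ->
  (QQ n)`_m - \sum_(j < m) (VV n)`_j.+1 * (QQ n)`_(m - j.+1)%N = (m == 0%N)%:R.
Proof.
move=> Hm.
have := congr1 (fun p : {poly {poly rat}} => p`_m) (tele (VV n) n.+1).
rewrite /= coefB coef1 (@pow_coef_low _ _ _ (VV0 n)); last by lia.
rewrite subr0 mulrBl mul1r coefB -/(QQ n) coefM big_ord_recl /= VV0 mul0r add0r.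
by [].
Qed.

Lemma VV_coef n i : (1 <= i <= n)%N ->
  (VV n)`_i = - (1 + 'X) * (((i`!)%:R^-1 : rat) *: xsR i).
Proof. by move=> Hi; rewrite /VV coefCM SS_coef Hi. Qed.

Lemma factK k : ((k`!)%:R : {poly rat}) * (((k`!)%:R^-1 : rat))%:P = 1.
Proof.
rewrite -(rmorph_nat (@polyC rat)) -polyCM mulfV ?polyC1 //.
by rewrite pnatr_eq0 -lt0n fact_gt0.
Qed.

Lemma hrec n m : (m <= n)%N ->
  \sum_(i < m.+1) 'C(m, i)%:R * (aa i * hh n (m - i)%N) =
  if m == 0%N then 1 + 'X else 0.
Proof.
move=> Hm; have := @Qrec n m Hm.
move/(congr1 (fun p => ((-1) ^+ m * (m`!)%:R) * ((1 + 'X) * p))).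
have -> : ((-1) ^+ m * (m`!)%:R) * ((1 + 'X) * (m == 0%N)%:R) =
          if m == 0%N then 1 + 'X else 0 :> {poly rat}.
  by case: m Hm => [|m] _ /=; rewrite ?expr0 ?mul1r ?mulr1 ?mulr0.
move=> <-.
rewrite big_ord_recl bin0 subn0 /aa /= !mul1r.
rewrite mulrBr mulrBr /hh; congr (_ + _).
rewrite mulr_sumr mulr_sumr -sumrN; apply: eq_bigr => i _.
rewrite /bump /= add1n.
have : (0 < i.+1 <= m)%N by have := ltn_ord i; lia.
move: (i.+1) => k /andP[Hk1 Hkm].
have Ak : aa k = (-1) ^+ k * (1 + 'X) * xsR k by rewrite /aa; case: k Hk1 Hkm.
rewrite VV_coef; last by apply/andP; split => //; lia.
rewrite -mul_polyC.
have [r Er] : exists r, m = (k + r)%N by exists (m - k)%N; lia.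
rewrite Er addKn exprD -(bin_fact (leq_addr r k)) addKn !natrM.
have FK := factK k; move: FK; set G := ((_ ^-1)%:P) => FK.
apply: (@eq_trans _ _ (_ * (k`!%:R * G))); first by rewrite FK mulr1.
ring.
Qed.

Lemma S2 k : ((-1) ^+ k * (-1) ^+ k : {poly rat}) = 1.
Proof. by rewrite -exprD -signr_odd oddD addbb. Qed.

Lemma main_rhs n : (1 <= n)%N ->
  \sum_(1 <= k < n.+1)
     ((-1) ^+ (n - k) * (k`!)%:R) *: ((1 + 'X) ^+ k.+1 * bellB n k xsR) =
  hh n n.
Proof.
move=> Hn.
rewrite /hh /QQ coef_sum big_ord_recl expr0 coef1.
have -> : (n == 0%N) = false by case: n Hn.
rewrite add0r big_add1 /= big_mkord mulr_sumr mulr_sumr.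
apply: eq_bigr => i _.
rewrite /bump /= add1n.
have : (0 < i.+1)%N /\ (i.+1 <= n)%N by have := ltn_ord i; lia.
move: (i.+1) => k [Hk1 Hkn].
rewrite (_ : bellB n k xsR = ((n`!)%:R / (k`!)%:R : rat) *: ((SS n) ^+ k)`_n) //.
rewrite /VV exprMn -rmorphXn coefCM.
rewrite -!mul_polyC !rmorphM /= !rmorphXn /= polyCN polyC1 !(rmorph_nat (@polyC rat)).
have En : (-1) ^+ n = (-1) ^+ (n - k) * (-1) ^+ k :> {poly rat} by rewrite -exprD subnK.
rewrite En [(- (1 + _)) ^+ k]exprNn exprS.
have FK := factK k; move: FK; set G := ((_ ^-1)%:P) => FK.
apply: (@eq_trans _ _ (_ * ((-1) ^+ k * (-1) ^+ k))); first by rewrite S2 mulr1.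
apply: esym; apply: (@eq_trans _ _ (_ * (k`!%:R * G))); first by rewrite FK mulr1.
ring.
Qed.

Theorem mainTheorem4 (n : nat) : (1 <= n)%N ->
  Rpoly n.+1 =
  \sum_(1 <= k < n.+1)
     ((-1) ^+ (n - k) * (k`!)%:R) *: ((1 + 'X) ^+ k.+1 * bellB n k xsR).
Proof.
move=> Hn; rewrite main_rhs //.
apply: (@uniq_rec n (fun m => Rpoly m.+1) (hh n)) => // m Hm.
by rewrite Rrec hrec.
Qed.
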